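(* Let $f(t)=\sum_{i=0}^m a_it^i\in D[t;\sigma]$ be monic of degree $m\ge 2$ with $a_0\neq0$. Then for every $j\in\{1,\dots,m-1\}$, the left multiplication $L_{t^j}:S_f\to S_f$, $x\mapsto t^j\circ x$, is surjective if and only if $\sigma$ is surjective. In particular, if $\sigma$ is not surjective then $S_f$ is not a left division algebra.
   Context: $D$ is an associative division ring and $\sigma$ a ring endomorphism of $D$. $D[t;\sigma]$ is the skew polynomial ring with $ta=\sigma(a)t$. For monic $f$ of degree $m$, $S_f$ is the set of polynomials of degree $<m$ with multiplication $g\circ h=$ remainder of $gh$ upon right division by $f$ ($gh=qf+r$ with $\deg r<m$). $S_f$ is a left division algebra if $L_a(x)=a\circ x$ is bijective for every nonzero $a\in S_f$. *)

(* Defs.v *)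
From HB Require Import structures.
From mathcomp Require Import all_boot all_order all_algebra.
Set Implicit Arguments. Unset Strict Implicit. Unset Printing Implicit Defensive.
Import GRing.Theory.
Local Open Scope ring_scope.

(* Skew polynomial ring D[t; sigma], with t a = sigma(a) t.
   Elements are represented by their coefficient lists, i.e. by {poly D}
   (as an additive group); the multiplication is the skew one below. *)

Section Skew.
Variable D : unitRingType.
Variable sigma : {rmorphism D -> D}.

Definition sigma_iter (i : nat) (x : D) : D := iter i sigma x.

(* (sum_i p_i t^i)(sum_j q_j t^j) = sum_k (sum_{i<=k} p_i sigma^i(q_{k-i})) t^k *)
Definition skew_mul (p q : {poly D}) : {poly D} :=
  \poly_(k < (size p + size q).-1)
     \sum_(i < k.+1) p`_i * sigma_iter i q`_(k - i).

(* Remainder of right division by f (f monic): g = q f + r, size r < size f.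
   Computed by repeatedly subtracting lead(g) t^(deg g - deg f) * f. *)
Fixpoint skew_rmod_aux (f : {poly D}) (n : nat) (g : {poly D}) : {poly D} :=
  match n with
  | 0 => g
  | n'.+1 =>
      if (size g < size f)%N then g
      else skew_rmod_aux f n'
             (g - skew_mul (lead_coef g *: 'X^(size g - size f)) f)
  end.

Definition skew_rmod (f g : {poly D}) : {poly D} := skew_rmod_aux f (size g) g.

Definition Sf_mul (f g h : {poly D}) : {poly D} := skew_rmod f (skew_mul g h).

Definition in_Sf (f x : {poly D}) : Prop := (size x < size f)%N.

Definition L_surjective (f a : {poly D}) : Prop :=
  forall y, in_Sf f y -> exists2 x, in_Sf f x & Sf_mul f a x = y.

Definition L_bijective (f a : {poly D}) : Prop :=
  L_surjective f a /\
  (forall x1 x2, in_Sf f x1 -> in_Sf f x2 -> Sf_mul f a x1 = Sf_mul f a x2 -> x1 = x2).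

Definition left_division_algebra (f : {poly D}) : Prop :=
  forall a, in_Sf f a -> a != 0 -> L_bijective f a.

End Skew.

Definition surjective_fun (A B : Type) (g : A -> B) : Prop := forall b, exists a, g a = b.

(* Main.v *)
Require Import Defs.
From HB Require Import structures.
From mathcomp Require Import all_boot all_order all_algebra.
From mathcomp Require Import zify.
Set Implicit Arguments. Unset Strict Implicit. Unset Printing Implicit Defensive.
Import GRing.Theory.
Local Open Scope ring_scope.

Section S.
Variable D : unitRingType.
Variable sigma : {rmorphism D -> D}.

Lemma si0 i : sigma_iter sigma i 0 = 0.
Proof. by elim: i => //= i IH; rewrite /sigma_iter /= -/(sigma_iter sigma i 0) IH rmorph0. Qed.
Lemma si1 i : sigma_iter sigma i 1 = 1.
Proof. by elim: i => //= i IH; rewrite /sigma_iter /= -/(sigma_iter sigma i 1) IH rmorph1. Qed.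
Lemma siS i x : sigma_iter sigma i.+1 x = sigma (sigma_iter sigma i x).
Proof. by []. Qed.

Lemma coef_skew p q k : (skew_mul sigma p q)`_k =
  \sum_(i < k.+1) p`_i * sigma_iter sigma i q`_(k - i).
Proof.
rewrite coef_poly; case: ifP => // /negbT; rewrite -leqNgt => H.
symmetry; apply: big1 => i _.
case: (ltnP i (size p)) => Hi; last by rewrite nth_default // mul0r.
rewrite (@nth_default _ _ q) ?si0 ?mulr0 //.
have := ltn_ord i; lia.
Qed.

Lemma skew_mulD p p' q : skew_mul sigma (p + p') q = skew_mul sigma p q + skew_mul sigma p' q.
Proof.
apply/polyP => k; rewrite coefD !coef_skew -big_split; apply: eq_bigr => i _.
by rewrite coefD mulrDl.
Qed.

Lemma skew_mulB p p' q : skew_mul sigma (p - p') q = skew_mul sigma p q - skew_mul sigma p' q.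
Proof.
apply/polyP => k; rewrite coefB !coef_skew -sumrB; apply: eq_bigr => i _.
by rewrite coefB mulrBl.
Qed.

Lemma skew_mul0 q : skew_mul sigma 0 q = 0.
Proof. by apply/polyP => k; rewrite coef_skew coef0 big1 // => i _; rewrite coef0 mul0r. Qed.

Lemma coef_skew_mon c n p k : (skew_mul sigma (c *: 'X^n) p)`_k =
  if (n <= k)%N then c * sigma_iter sigma n p`_(k - n) else 0.
Proof.
rewrite coef_skew.
rewrite (eq_bigr (fun i : 'I_k.+1 => if (i == n :> nat) then c * sigma_iter sigma n p`_(k - n) else 0)); last first.
  move=> i _; rewrite coefZ coefXn; case: eqP => [->|_]; first by rewrite mulr1.
  by rewrite mulr0 mul0r.
rewrite -big_mkcond /= (big_ord1_eq _ (fun=> c * sigma_iter sigma n p`_(k - n))).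
by rewrite ltnS.
Qed.

Lemma Xmon : 'X = 1 *: 'X^1 :> {poly D}.
Proof. by rewrite scale1r expr1. Qed.
Lemma Xnmon n : 'X^n = 1 *: 'X^n :> {poly D}.
Proof. by rewrite scale1r. Qed.

Lemma skew_mulX p k : (skew_mul sigma 'X p)`_k.+1 = sigma p`_k.
Proof. by rewrite Xmon coef_skew_mon /= mul1r subn1. Qed.
Lemma skew_mulX0 p : (skew_mul sigma 'X p)`_0 = 0.
Proof. by rewrite Xmon coef_skew_mon. Qed.

Lemma skew_mulXn n p : skew_mul sigma 'X (skew_mul sigma 'X^n p) = skew_mul sigma 'X^(n.+1) p.
Proof.
apply/polyP => [[|k]]; first by rewrite skew_mulX0 (Xnmon n.+1) coef_skew_mon.
idtac.
rewrite skew_mulX (Xnmon n.+1) (Xnmon n) !coef_skew_mon !mul1r ltnS.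
by case: leqP => _; rewrite ?rmorph0 // subSS.
Qed.

Lemma skew_assocX q g : skew_mul sigma 'X (skew_mul sigma q g) = skew_mul sigma (skew_mul sigma 'X q) g.
Proof.
apply/polyP => [[|k]].
  rewrite skew_mulX0 coef_skew big_ord1 /=; have -> := skew_mulX0 q; by rewrite mul0r.
rewrite skew_mulX [RHS]coef_skew big_ord_recl /=; have -> := skew_mulX0 q; rewrite mul0r add0r coef_skew rmorph_sum.
apply: eq_bigr => i _; rewrite rmorphM /= skew_mulX /bump /= add1n subSS.
by [].
Qed.

Lemma skew_mulC c q : skew_mul sigma c%:P q = c *: q.
Proof.
apply/polyP => k; rewrite -[c%:P]mulr1 -scale_polyE -(expr0 'X) coef_skew_mon coefZ /=.
by rewrite subn0.
Qed.


Variable f : {poly D}.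
Hypothesis hmonic : f \is monic.

Lemma f_neq0 : f != 0.
Proof. exact: monic_neq0. Qed.

Lemma f_lead : f`_(size f).-1 = 1.
Proof. by rewrite -lead_coefE; apply/monicP. Qed.

Lemma size_f_gt0 : (0 < size f)%N.
Proof. by rewrite size_poly_gt0 f_neq0. Qed.

Lemma lead_skew (q : {poly D}) : q != 0 ->
  (skew_mul sigma q f)`_((size q).-1 + (size f).-1) = lead_coef q.
Proof.
move=> q0; have hq : (0 < size q)%N by rewrite size_poly_gt0.
have hf := size_f_gt0.
rewrite coef_skew.
have hn : ((size q).-1 < ((size q).-1 + (size f).-1).+1)%N by lia.
rewrite (bigD1 (Ordinal hn)) //= big1 ?addr0.
  by rewrite addKn f_lead si1 mulr1 lead_coefE.
move=> i /eqP /= hi.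
have : nat_of_ord i <> (size q).-1 by move=> h; apply: hi; apply: val_inj.
move=> {}hi.
case: (ltnP i (size q)) => hi2.
  rewrite (@nth_default _ _ f) ?si0 ?mulr0 //.
  have := ltn_ord i; move=> hh; move: hi hi2 hh hq hf; move: (size q) (size f) (nat_of_ord i); clear; move=> a b c; lia.
by rewrite nth_default // mul0r.
Qed.

Lemma skew_small (q : {poly D}) : (size (skew_mul sigma q f) < size f)%N -> q = 0.
Proof.
move=> hs; apply/eqP; apply: contraLR hs => q0.
rewrite -leqNgt.
have := lead_skew q0.
have hl : lead_coef q != 0 by rewrite lead_coef_eq0.
move=> h.
have : ((size q).-1 + (size f).-1 < size (skew_mul sigma q f))%N.
  by rewrite ltnNge; apply/negP => /leq_sizeP /(_ _ (leqnn _)); rewrite h; apply/eqP.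
have := size_f_gt0; lia.
Qed.

Lemma rmod_aux_ex n (g : {poly D}) : (size g <= n)%N ->
  exists Q, g = skew_mul sigma Q f + skew_rmod_aux sigma f n g
            /\ (size (skew_rmod_aux sigma f n g) < size f)%N.
Proof.
elim: n g => [|n IH] g hg /=.
  move: hg; rewrite leqn0 size_poly_eq0 => /eqP ->.
  by exists 0; rewrite skew_mul0 add0r size_poly0 size_f_gt0.
case: ifP => hgf.
  by exists 0; rewrite skew_mul0 add0r.
move/negbT: hgf; rewrite -leqNgt => hgf.
set c := lead_coef g; set d := (size g - size f)%N.
set g' := g - _.
have hg' : (size g' <= n)%N.
  suff : (size g' <= (size g).-1)%N by lia.
  apply/leq_sizeP => k hk.
  rewrite /g' coefB coef_skew_mon.
  have hf := size_f_gt0.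
  have -> : (d <= k)%N by rewrite /d; lia.
  case: (ltnP k (size g)) => hk2.
    have -> : k = (size g).-1 by lia.
    have -> : ((size g).-1 - d = (size f).-1)%N by rewrite /d; move: hgf hf; move: (size g) (size f) => a b; lia.
    by rewrite f_lead si1 mulr1 /c lead_coefE subrr.
  rewrite nth_default // (@nth_default _ _ f) ?si0 ?mulr0 ?subrr //.
  rewrite /d; move: hgf hk2; move: (size g) (size f) => a b; lia.
have [Q [hQ1 hQ2]] := IH g' hg'.
exists (Q + c *: 'X^d); split => //.
by rewrite skew_mulD addrAC -hQ1 /g' subrK.
Qed.

Lemma rmod_ex (g : {poly D}) : exists Q, g = skew_mul sigma Q f + skew_rmod sigma f g
            /\ (size (skew_rmod sigma f g) < size f)%N.
Proof. exact: rmod_aux_ex. Qed.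

Lemma rmod_char (g Q r : {poly D}) : g = skew_mul sigma Q f + r -> (size r < size f)%N ->
  skew_rmod sigma f g = r.
Proof.
move=> hg hr.
have [Q' [h1 h2]] := rmod_ex g.
have e : skew_mul sigma (Q - Q') f = skew_rmod sigma f g - r.
  have hQ : skew_mul sigma Q f = g - r by rewrite hg addrK.
  have hQ' : skew_mul sigma Q' f = g - skew_rmod sigma f g by rewrite {1}h1 addrK.
  by rewrite skew_mulB hQ hQ' opprB addrC addrA subrK.
have : (size (skew_mul sigma (Q - Q') f) < size f)%N.
  rewrite e; apply: leq_ltn_trans (size_polyD _ _) _.
  by rewrite size_polyN gtn_max hr h2.
move/skew_small => h0; move: e; rewrite h0 skew_mul0 => /eqP.
by rewrite eq_sym subr_eq0 => /eqP.
Qed.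


Lemma siD i a b : sigma_iter sigma i (a + b) = sigma_iter sigma i a + sigma_iter sigma i b.
Proof. by elim: i => [|i IH] //; rewrite !siS IH rmorphD. Qed.

Lemma skew_mulDr p q q' : skew_mul sigma p (q + q') = skew_mul sigma p q + skew_mul sigma p q'.
Proof.
apply/polyP => k; rewrite coefD !coef_skew -big_split; apply: eq_bigr => i _.
by rewrite coefD siD mulrDr.
Qed.

Lemma Sf_in a x : (size (Sf_mul sigma f a x) < size f)%N.
Proof. by have [Q [_ h]] := rmod_ex (skew_mul sigma a x). Qed.

Lemma Sf_iter n x : Sf_mul sigma f 'X^(n.+1) x = Sf_mul sigma f 'X (Sf_mul sigma f 'X^n x).
Proof.
rewrite /Sf_mul.
have [Q [h1 h2]] := rmod_ex (skew_mul sigma 'X^n x).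
set r := skew_rmod sigma f (skew_mul sigma 'X^n x) in h1 h2 *.
have [Q' [h1' h2']] := rmod_ex (skew_mul sigma 'X r).
apply: (@rmod_char _ (skew_mul sigma 'X Q + Q')) => //.
rewrite -skew_mulXn h1 skew_mulDr skew_assocX skew_mulD {1}h1'.
by rewrite addrA.
Qed.

Lemma Sf_one (x : {poly D}) : (size x < size f)%N -> Sf_mul sigma f 'X^0 x = x.
Proof.
move=> hx; apply: (@rmod_char _ 0) => //.
by rewrite skew_mul0 add0r expr0 -polyC1 skew_mulC scale1r.
Qed.

Hypothesis hf2 : (1 < size f)%N.

Lemma SfX (x : {poly D}) : (size x < size f)%N ->
  Sf_mul sigma f 'X x = skew_mul sigma 'X x - sigma x`_((size f).-2) *: f.
Proof.
move=> hx; apply: (@rmod_char _ (sigma x`_((size f).-2))%:P).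
  by rewrite skew_mulC addrC subrK.
have : (size (skew_mul sigma 'X x - sigma x`_((size f).-2) *: f)%R <= (size f).-1)%N.
  apply/leq_sizeP => -[|k] hk.
    by move: hk hf2; move: (size f) => a; lia.
  rewrite coefB coefZ skew_mulX.
  case: (ltnP (size f).-1 k.+1) => hk2.
    rewrite (@nth_default _ _ x k); last by move: hk2 hx; move: (size f) (size x) => a b; lia.
    rewrite (@nth_default _ _ f k.+1); last by move: hk2; move: (size f) => a; lia.
    by rewrite rmorph0 mulr0 subrr.
  have ek : k = (size f).-2 by move: hk hk2; move: (size f) => a; lia.
  have -> : k.+1 = (size f).-1 by move: ek hf2; move: (size f) => a; lia.
  by rewrite f_lead mulr1 ek subrr.
by move: hf2; move: (size f) (size _) => a b; lia.
Qed.

End S.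

Unset Implicit Arguments. Set Strict Implicit.

Theorem mainTheorem7 (D : unitRingType)
    (hD : forall x : D, x != 0 -> x \is a GRing.unit)
    (sigma : {rmorphism D -> D}) (f : {poly D})
    (hmonic : f \is monic) (hm : (2 < size f)%N) (ha0 : f`_0 != 0) :
  (forall j : nat, (0 < j < (size f).-1)%N ->
     (L_surjective sigma f 'X^j <-> surjective_fun sigma))
  /\ (~ surjective_fun sigma -> ~ left_division_algebra sigma f).
Proof.
have hf2 : (1 < size f)%N by move: hm; move: (size f) => a; lia.
have ua : f`_0 \is a GRing.unit by exact: hD.
have toS : forall j, (0 < j)%N -> L_surjective sigma f 'X^j -> surjective_fun sigma.
  move=> [|j] // _ hL b.
  have hy : in_Sf f (- (b * f`_0)%:P).
    rewrite /in_Sf size_polyN; apply: leq_ltn_trans (size_polyC_leq1 _) hf2.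
  have [x hx e] := hL _ hy.
  rewrite Sf_iter // SfX // ?Sf_in // in e.
  exists ((Sf_mul sigma f 'X^j x)`_((size f).-2)).
  have := congr1 (fun p : {poly D} => p`_0) e.
  rewrite /= coefB coefZ skew_mulX0 coefN coefC /= add0r => /oppr_inj.
  by move/(mulIr ua).
split; last first.
  move=> ns hlda; apply: ns; apply: (toS 1%N) => //.
  rewrite expr1; apply: (proj1 (hlda 'X _ _)).
    by rewrite /in_Sf size_polyX.
  by rewrite polyX_eq0.
move=> j /andP [hj0 hj1]; split; first exact: toS.
move=> hs.
have hs' : forall b : D, exists a : D, sigma a == b.
  by move=> b; have [a ha] := hs b; exists a; apply/eqP.
pose pre b := xchoose (hs' b).
have preP b : sigma (pre b) = b by exact: (eqP (xchooseP (hs' b))).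
have LX : L_surjective sigma f 'X.
  move=> y hy.
  pose m := (size f).-1.
  pose c := - (y`_0 * (f`_0)^-1).
  pose x : {poly D} := \poly_(k < m) (if k == m.-1 then pre c else pre (y`_k.+1 + c * f`_k.+1)).
  have hxs : (size x < size f)%N.
    apply: leq_ltn_trans (size_poly _ _) _; rewrite /m; move: hf2; move: (size f) => a; lia.
  exists x => //.
  rewrite SfX //.
  have -> : x`_((size f).-2) = pre c.
    rewrite coef_poly /m.
    have -> : ((size f).-2 < (size f).-1)%N by move: hf2; move: (size f) => a; lia.
    by rewrite eqxx.
  rewrite preP.
  apply/polyP => -[|k].
    rewrite coefB coefZ skew_mulX0 sub0r /c mulNr opprK divrK //.
  rewrite coefB coefZ skew_mulX coef_poly.
  case: (ltnP k m) => hk.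
    case: eqP => hkm.
      rewrite preP.
      have -> : k.+1 = (size f).-1 by move: hkm hk hf2; rewrite /m; move: (size f) => a; lia.
      rewrite f_lead // mulr1 subrr nth_default //.
      by move: hy; rewrite /in_Sf; move: (size f) (size y) => a b'; lia.
    by rewrite preP addrK.
  rewrite rmorph0 (@nth_default _ _ f k.+1); last by move: hk; rewrite /m; move: (size f) => a; lia.
  rewrite mulr0 subrr nth_default //.
  by move: hk hy; rewrite /in_Sf /m; move: (size f) (size y) => a b'; lia.
clear hj0 hj1.
elim: j => [|j IH].
  by move=> y hy; exists y => //; rewrite Sf_one.
move=> y hy.
have [z hz ez] := LX y hy.
have [x hx ex] := IH z hz.
by exists x => //; rewrite Sf_iter // ex.
Qed.
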